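(* For every $n$, there is a labeling scheme for $n\times n$ permutation matrices for dominance sum queries with labels of $O(\sqrt{n}\log n)$ bits: there is an encoder that, given any $n\times n$ permutation matrix $P$, assigns a label of $O(\sqrt{n}\log n)$ bits to each row and each column of $P$, and a decoder (depending only on $n$) that, given only the label of row $i$ and the label of column $j$, outputs $\sum_{i'\ge i,\,j'\ge j}P[i',j']$.
   Context: A permutation matrix here is a $0/1$ matrix in which every row and every column contains at most one entry equal to $1$. (Such matrices are used to represent unit-Monge matrices: for a permutation matrix $P$, the matrix $M[i,j]=\sum_{i'\ge i,j'\ge j}P[i',j']$ is unit-Monge.) *)

(* Defs.v *)
From mathcomp Require Import all_boot all_algebra.
Set Implicit Arguments. Unset Strict Implicit. Unset Printing Implicit Defensive.

Definition perm01_mx (n : nat) (P : 'M[nat]_n) : Prop :=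
  (forall i j, P i j = 0 \/ P i j = 1) /\
  (forall i j j', P i j = 1 -> P i j' = 1 -> j = j') /\
  (forall i i' j, P i j = 1 -> P i' j = 1 -> i = i').

Definition dom_sum (n : nat) (P : 'M[nat]_n) (i j : 'I_n) : nat :=
  \sum_(i' < n | i <= i') \sum_(j' < n | j <= j') P i' j'.

Definition label := seq bool.

(* Bound C * sqrt(n) * log n, written without square roots as
   (size)^2 <= C * n * (1 + floor(log2 n))^2. *)
Definition label_ok (C n : nat) (l : label) : Prop :=
  size l ^ 2 <= C * n * (trunc_log 2 n).+1 ^ 2.

(* Main.v *)
Require Import Defs.
From mathcomp Require Import all_boot all_algebra.
From mathcomp Require Import zify.
Set Implicit Arguments. Unset Strict Implicit.

Fixpoint enc_nat (w x : nat) : seq bool :=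
  if w is w'.+1 then odd x :: enc_nat w' x./2 else [::].
Fixpoint dec_nat (s : seq bool) : nat :=
  if s is b :: s' then b + (dec_nat s').*2 else 0.

Lemma size_enc_nat w x : size (enc_nat w x) = w.
Proof. by elim: w x => [|w IH] x //=; rewrite IH. Qed.

Lemma enc_natK w x : x < 2 ^ w -> dec_nat (enc_nat w x) = x.
Proof.
elim: w x => [|w IH] x /=; first by rewrite expn0; case: x.
move=> hx; rewrite IH ?odd_double_half //.
by rewrite ltn_half_double -mul2n -expnS.
Qed.

Definition enc_seq w (xs : seq nat) : seq bool := flatten (map (enc_nat w) xs).
Definition get w (s : seq bool) k := dec_nat (take w (drop (k * w) s)).

Lemma size_enc_seq w xs : size (enc_seq w xs) = size xs * w.
Proof.
elim: xs => [|x xs IH] //=.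
by rewrite /enc_seq /= size_cat size_enc_nat -/(enc_seq w xs) IH mulSn.
Qed.

Lemma get_enc w xs k : all (fun x => x < 2 ^ w) xs ->
  get w (enc_seq w xs) k = nth 0 xs k.
Proof.
elim: xs k => [|x xs IH] k.
  by rewrite /get /= nth_nil; case: (k * w).
move=> /= /andP[hx hxs].
rewrite /get /enc_seq /= -/(enc_seq w xs).
case: k => [|k] /=.
  by rewrite mul0n drop0 take_size_cat ?size_enc_nat // enc_natK.
by rewrite mulSn addnC -drop_drop drop_size_cat ?size_enc_nat // -/(get w _ k) IH.
Qed.

Definition pp n (P : 'M[nat]_n.+1) x y : nat :=
  if (x < n.+1) && (y < n.+1) then P (inord x) (inord y) else 0.

Lemma pp01 n (P : 'M[nat]_n.+1) x y : perm01_mx P -> pp P x y <= 1.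
Proof.
move=> [h01 _]; rewrite /pp; case: ifP => // _.
by case: (h01 (inord x) (inord y)) => ->.
Qed.

Lemma dom_sumE n (P : 'M[nat]_n.+1) (i j : 'I_n.+1) :
  dom_sum P i j = \sum_(i <= x < n.+1) \sum_(j <= y < n.+1) pp P x y.
Proof.
rewrite /dom_sum big_geq_mkord; apply: eq_bigr => x _.
rewrite big_geq_mkord; apply: eq_bigr => y _.
by rewrite /pp !ltn_ord /= !inord_val.
Qed.

Lemma sum_nat_eq m N x0 c :
  \sum_(m <= x < N) (if x == x0 then c else 0) = if m <= x0 < N then c else 0.
Proof.
elim: N => [|N IH]; first by rewrite big_geq // ltn0 andbF.
case: (leqP m N) => hmN.
  by rewrite big_nat_recr //= IH; case: eqP => [<-|hne]; do 2 case: ifP; lia.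
rewrite big_geq // ; case: (boolP (m <= x0 < N.+1)) => //; lia.
Qed.

Definition vv n (P : 'M[nat]_n.+1) y := \sum_(0 <= x < n.+1) x.+1 * pp P x y.

Lemma col_sum n (P : 'M[nat]_n.+1) i y : perm01_mx P ->
  \sum_(i <= x < n.+1) pp P x y = (i < vv P y).
Proof.
move=> hP; have [h01 [_ hcol]] := hP.
case: (boolP [exists x : 'I_n.+1, pp P x y == 1]).
  move/existsP => [x0 /eqP H0].
  have hy : y < n.+1 by move: H0; rewrite /pp; case: ifP => // /andP[].
  have Hx : forall x, x < n.+1 -> pp P x y = if x == x0 then 1 else 0.
    move=> x hx; case: (eqVneq x x0) => [->|hne]; first by [].
    move: H0; rewrite /pp hx hy ltn_ord /= => H0.
    case: (h01 (inord x) (inord y)) => // H1.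
    have := hcol _ _ _ H1 H0 => /(congr1 val) /=; rewrite inordK // => e.
    by move: hne; rewrite e inord_val eqxx.
  rewrite /vv (eq_big_nat _ _ (F2 := fun x => if x == x0 then 1 else 0)); last first.
    by move=> x /andP[_ hx]; rewrite Hx.
  rewrite (eq_big_nat _ _ (F1 := fun x => x.+1 * pp P x y) (F2 := fun x => if x == x0 then x0.+1 else 0)); last first.
    by move=> x /andP[_ hx]; rewrite Hx //; case: eqP => [->|]; rewrite ?muln1 ?muln0.
  by rewrite !sum_nat_eq ltn_ord /= andbT ltnS; case: (i <= x0).
move=> hne.
have Hx : forall x, x < n.+1 -> pp P x y = 0.
  move=> x hx; have := pp01 x y hP; rewrite leq_eqVlt ltnS leqn0 => /orP[/eqP h1|/eqP //].
  move/existsP: hne => hne; exfalso; apply: hne; exists (Ordinal hx); by rewrite /= h1.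
rewrite /vv (eq_big_nat _ _ (F1 := fun x => x.+1 * pp P x y) (F2 := fun x => 0)); last by move=> x /andP[_ hx]; rewrite Hx ?muln0.
rewrite (eq_big_nat _ _ (F1 := fun x => pp P x y) (F2 := fun x => 0)); last by move=> x /andP[_ hx]; rewrite Hx.
by rewrite !big1_eq.
Qed.

Definition AA n (P : 'M[nat]_n.+1) b i k :=
  \sum_(i <= x < n.+1) \sum_(k * b <= y < n.+1) pp P x y.
Definition colv n (P : 'M[nat]_n.+1) b j r :=
  if r < j - (j %/ b) * b then vv P (r + (j %/ b) * b) else 0.

Lemma main_id n (P : 'M[nat]_n.+1) b (i j : 'I_n.+1) : perm01_mx P -> 0 < b ->
  dom_sum P i j = AA P b i (j %/ b) - \sum_(0 <= r < b) (i < colv P b j r).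
Proof.
move=> hP hb.
set k := j %/ b.
have hkj : k * b <= j by apply: leq_divM.
have hjb : j - k * b <= b.
  by have := divn_eq j b; have := ltn_pmod j hb; rewrite /k; lia.
have -> : \sum_(0 <= r < b) (i < colv P b j r) =
   \sum_(i <= x < n.+1) \sum_(k * b <= y < j) pp P x y.
  rewrite exchange_big_nat /=.
  rewrite (eq_big_nat _ _ (F1 := fun y => \sum_(i <= x < n.+1) pp P x y)
     (F2 := fun y => (i < vv P y))); last by move=> y _; rewrite col_sum.
  rewrite -{1}[k * b]add0n big_addn (big_nat_widen _ _ _ _ _ hjb) [RHS]big_mkcond /=.
  apply: eq_big_nat => r _; rewrite /colv -/k.
  by case: ifP.
rewrite /AA dom_sumE.
have -> : \sum_(i <= x < n.+1) \sum_(k * b <= y < n.+1) pp P x y =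
   \sum_(i <= x < n.+1) (\sum_(k * b <= y < j) pp P x y + \sum_(j <= y < n.+1) pp P x y).
  by apply: eq_bigr => x _; rewrite (big_cat_nat hkj (ltnW (ltn_ord j))).
by rewrite big_split /= addKn.
Qed.

Lemma AA_le n (P : 'M[nat]_n.+1) b i k : perm01_mx P -> AA P b i k <= n.+1 * n.+1.
Proof.
move=> hP; rewrite /AA.
apply: (@leq_trans (\sum_(i <= x < n.+1) \sum_(k * b <= y < n.+1) 1)).
  by apply: leq_sum => x _; apply: leq_sum => y _; apply: pp01.
rewrite !sum_nat_const_nat muln1; apply: leq_mul; apply: leq_subr.
Qed.

Lemma vv_le n (P : 'M[nat]_n.+1) y : perm01_mx P -> vv P y <= n.+1 * n.+1.
Proof.
move=> hP; rewrite /vv.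
apply: (@leq_trans (\sum_(0 <= x < n.+1) n.+1)); last by rewrite sum_nat_const_nat subn0.
rewrite big_nat_cond [X in _ <= X]big_nat_cond; apply: leq_sum => x /andP[/andP[_ hx] _].
have := pp01 x y hP; rewrite leq_eqVlt ltnS leqn0 => /orP[/eqP ->|/eqP ->]; lia.
Qed.

Lemma col_le n (P : 'M[nat]_n.+1) b j r : perm01_mx P -> colv P b j r <= n.+1 * n.+1.
Proof. by move=> hP; rewrite /colv; case: ifP => // _; apply: vv_le. Qed.

Lemma sq_lt N : N * N < 2 ^ (2 * (trunc_log 2 N).+1).
Proof.
have h := @trunc_log_ltn 2 N isT.
by rewrite mul2n -addnn expnD; apply: ltn_mul.
Qed.

Lemma size_bound N : 0 < N ->
  ((2 ^ ((trunc_log 2 N)./2).+1).+1 * (2 * (trunc_log 2 N).+1)) ^ 2 <= 64 * N * (trunc_log 2 N).+1 ^ 2.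
Proof.
move=> hN; set t := trunc_log 2 N.
have h1 := @trunc_logP 2 N isT hN; rewrite -/t in h1.
have h2 : 2 ^ (t./2) * 2 ^ (t./2) <= N.
  apply: leq_trans h1; rewrite -expnD; apply: leq_pexp2l => //.
  have := odd_double_half t; have := leq_b1 (odd t); lia.
have h3 : 0 < 2 ^ (t./2) by rewrite expn_gt0.
set B := 2 ^ (t./2) in h2 h3 *.
have eX : 2 ^ (t./2).+1 = 2 * B by rewrite expnS.
rewrite eX; set T := t.+1.
set X := (2 * B).+1.
have HX : X * X * 4 <= 64 * N by rewrite /X; nia.
have -> : (X * (2 * T)) ^ 2 = (X * X * 4) * (T * T).
  by rewrite !expnS expn0 !muln1; nia.
have -> : 64 * N * T ^ 2 = 64 * N * (T * T) by rewrite !expnS expn0 muln1.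
by apply: leq_mul.
Qed.

Lemma bb_gt N : N < 2 ^ ((trunc_log 2 N)./2).+1 * 2 ^ ((trunc_log 2 N)./2).+1.
Proof.
set t := trunc_log 2 N; have h := @trunc_log_ltn 2 N isT; rewrite -/t in h.
apply: (leq_trans h); rewrite -expnD; apply: leq_pexp2l => //.
have := odd_double_half t; have := leq_b1 (odd t); lia.
Qed.

Theorem lemma15 :
  exists C : nat, forall n : nat,
    exists (enc_row enc_col : 'M[nat]_n -> 'I_n -> label)
           (dec : label -> label -> nat),
      forall P : 'M[nat]_n, perm01_mx P ->
        (forall i : 'I_n, label_ok C n (enc_row P i)) /\
        (forall j : 'I_n, label_ok C n (enc_col P j)) /\
        (forall i j : 'I_n, dec (enc_row P i) (enc_col P j) = dom_sum P i j).
Proof.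
exists 64 => n; case: n => [|n].
  exists (fun _ _ => [::]), (fun _ _ => [::]), (fun _ _ => 0) => P _.
  by split; [case|split; [case|case]].
pose N := n.+1; pose t := trunc_log 2 N; pose w := 2 * t.+1; pose b := 2 ^ (t./2).+1.
exists (fun P (i : 'I_n.+1) => enc_seq w (val i :: mkseq (AA P b i) b)),
  (fun P (j : 'I_n.+1) => enc_seq w (j %/ b :: mkseq (colv P b j) b)),
  (fun lr lc => get w lr (get w lc 0).+1 - \sum_(0 <= r < b) (get w lr 0 < get w lc r.+1)).
move=> P hP.
have hall : forall x, x <= N * N -> x < 2 ^ w.
  by move=> x hx; apply: (leq_ltn_trans hx); apply: sq_lt.
have hb : 0 < b by rewrite expn_gt0.
have hNN : N <= N * N by rewrite leq_pmulr.
split; [|split].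
- move=> i; rewrite /label_ok size_enc_seq /= size_mkseq; exact: size_bound.
- move=> j; rewrite /label_ok size_enc_seq /= size_mkseq; exact: size_bound.
move=> i j.
have hallr : all (fun x => x < 2 ^ w) (val i :: mkseq (AA P b i) b).
  rewrite /= hall ?(leq_trans _ hNN) 1?ltnW ?ltn_ord //=.
  by apply/allP => x /mapP [r _ ->]; apply: hall; apply: AA_le.
have hkb : j %/ b < b.
  by rewrite ltn_divLR // (leq_trans (ltn_ord j)) // ltnW // bb_gt.
have hallc : all (fun x => x < 2 ^ w) (j %/ b :: mkseq (colv P b j) b).
  rewrite /= hall ?(leq_trans _ hNN) //=; last first.
    by rewrite (leq_trans (leq_div _ _)) // ltnW.
  by apply/allP => x /mapP [r _ ->]; apply: hall; apply: col_le.
cbv beta; rewrite (get_enc 0 hallc) (get_enc 0 hallr) /=.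
rewrite (get_enc _ hallr) /= nth_mkseq // (main_id _ _ hP hb); congr (_ - _).
apply: eq_big_nat => r /andP[_ hr].
by rewrite (get_enc _ hallc) /= nth_mkseq.
Qed.
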